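(* Let $k\ge 2$, let $H_0$ be a finite $k$-uniform hypergraph and let $(H_t)_{t\ge0}$ be the ILTH hypergraphs generated from $H_0$. The number of hypertriangles in $H_t$ is $\Theta\left(\left((k-1)^3+3(k-1)\right)^t\right)$.
   Context: A $k$-uniform hypergraph has every hyperedge a $k$-element subset of the vertex set. The ILTH process: given $H_t$, form $H_{t+1}$ by adding for each vertex $x\in V(H_t)$ a new vertex $x'$ (its clone), and taking $E(H_{t+1})=E(H_t)\cup\{(e\setminus\{x\})\cup\{x'\} : e\in E(H_t),\ x\in e\}$. A hypertriangle is a 6-tuple $(u,e_1,v,e_2,w,e_3)$ with $u,v,w$ distinct vertices, $e_1,e_2,e_3$ distinct hyperedges, $u,v\in e_1$, $v,w\in e_2$, $w,u\in e_3$. Asymptotics are as $t\to\infty$ with $k$ and $H_0$ fixed. *)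

(* Defs.v *)
From mathcomp Require Import all_boot.
From Stdlib Require Import Rdefinitions Raxioms RIneq.
Local Open Scope nat_scope.

Set Implicit Arguments.
Unset Strict Implicit.
Unset Printing Implicit Defensive.

Record hgraph := HGraph { hvert : finType ; hedges : {set {set hvert}} }.

Definition uniform (k : nat) (H : hgraph) : Prop :=
  forall e, e \in hedges H -> #|e| = k.

(* One ILTH step.  The vertex set of H_{t+1} is V(H_t) * bool:
   (x, false) is the old vertex x, (x, true) is its clone x'. *)
Definition ilth_edges (T : finType) (E : {set {set T}}) : {set {set (T * bool)%type}} :=
  [set [set (y, false) | y in e] | e : {set T} in E] :|:
  [set [set (y, false) | y in e :\ x] :|: [set (x, true)] | e : {set T} in E, x : T in e].

Definition ilth_step (H : hgraph) : hgraph :=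
  @HGraph (hvert H * bool)%type (@ilth_edges (hvert H) (hedges H)).

Fixpoint ilth (H0 : hgraph) (t : nat) : hgraph :=
  match t with
  | 0 => H0
  | t'.+1 => ilth_step (ilth H0 t')
  end.

Definition is_hypertriangle (H : hgraph)
  (u : hvert H) (e1 : {set hvert H}) (v : hvert H) (e2 : {set hvert H})
  (w : hvert H) (e3 : {set hvert H}) : bool :=
  [&& u != v, v != w, w != u,
      e1 \in hedges H, e2 \in hedges H, e3 \in hedges H,
      e1 != e2, e2 != e3, e3 != e1,
      (u \in e1) && (v \in e1), (v \in e2) && (w \in e2) & (w \in e3) && (u \in e3)].

Definition num_hypertriangles (H : hgraph) : nat :=
  #|[set p : (hvert H * {set hvert H} * hvert H * {set hvert H} * hvert H * {set hvert H})%type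
     | is_hypertriangle p.1.1.1.1.1 p.1.1.1.1.2 p.1.1.1.2 p.1.1.2 p.1.2 p.2]|.

Definition big_Theta (f g : nat -> R) : Prop :=
  exists c1 c2 : R, exists N : nat,
    (0 < c1)%R /\ (0 < c2)%R /\
    forall t : nat, (N <= t)%nat ->
      (c1 * g t <= f t)%R /\ (f t <= c2 * g t)%R.

(* Main.v *)
Require Import Defs.
From mathcomp Require Import all_boot.
From Stdlib Require Import Reals.
From mathcomp Require Import zify.
From Stdlib Require Import Lra Psatz.

Set Implicit Arguments.
Unset Strict Implicit.
Unset Printing Implicit Defensive.

Definition tup (T : finType) :=
  (T * {set T} * T * {set T} * T * {set T})%type.

Definition goodb (T : finType) (E : {set {set T}}) (p : tup T) : bool :=
  [&& p.1.1.1.1.1 != p.1.1.1.2, p.1.1.1.2 != p.1.2, p.1.2 != p.1.1.1.1.1,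
      p.1.1.1.1.2 \in E, p.1.1.2 \in E, p.2 \in E,
      (p.1.1.1.1.1 \in p.1.1.1.1.2) && (p.1.1.1.2 \in p.1.1.1.1.2),
      (p.1.1.1.2 \in p.1.1.2) && (p.1.2 \in p.1.1.2) &
      (p.1.2 \in p.2) && (p.1.1.1.1.1 \in p.2)].

Section Gen.
Variable T : finType.

Definition oldS (e : {set T}) : {set T * bool} := [set (y, false) | y in e].
Definition clS (e : {set T}) (x : T) : {set T * bool} :=
  [set (y, false) | y in e :\ x] :|: [set (x, true)].
Definition L (e : {set T}) (c : option T) :=
  if c is Some x then clS e x else oldS e.
Definition Copt (e : {set T}) : {set option T} :=
  [set c : option T | if c is Some x then x \in e else true].

Lemma memL e c y b : c \in Copt e ->
  ((y, b) \in L e c) = (if b then c == Some y else (y \in e) && (c != Some y)).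
Proof.
rewrite inE; case: c => [x|] /= xe.
- rewrite /clS !inE; case: b => /=.
  + apply/idP/idP.
    * case/orP => [/imsetP[z _ //]|/eqP[->//]].
    * move/eqP=> [->]; by rewrite eqxx orbT.
  + rewrite xpair_eqE andbF orbF; apply/imsetP/idP.
    * move=> [z]; rewrite !inE => /andP[zx ze] [->]; rewrite ze /=.
      by apply: contra zx => /eqP[->].
    * move/andP=> [ye yx]; exists y => //; rewrite !inE ye andbT.
      by apply: contra yx => /eqP->.
- rewrite /oldS; case: b => /=.
  + by apply/imsetP => -[z _].
  + rewrite andbT; apply/imsetP/idP.
    * by move=> [z ze [->]].
    * by move=> ye; exists y.
Qed.

Lemma fst_pair (A : {set T}) (b : bool) :
  [set z.1 | z in [set (y, b) | y in A]] = A.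
Proof.
apply/setP => y; apply/imsetP/idP.
- by move=> [z /imsetP[a aA ->] ->].
- move=> yA; exists (y, b) => //; exact: imset_f.
Qed.

Lemma memL' e c y b : c \in Copt e -> y \in e ->
  ((y, b) \in L e c) = (b == (c == Some y)).
Proof.
move=> ce ye; rewrite memL // ye /=.
by case: b; case: (c == Some y).
Qed.

Lemma fstL e c : c \in Copt e -> [set z.1 | z in L e c] = e.
Proof.
rewrite inE; case: c => [x|] /= xe.
- rewrite /clS imsetU imset_set1 /= fst_pair.
  by rewrite setUC /= setD1K.
- by rewrite /oldS fst_pair.
Qed.

Lemma L_inj e c c' : c \in Copt e -> c' \in Copt e -> L e c = L e c' -> c = c'.
Proof.
move=> ce ce' eqL.
case: c ce eqL => [x|] ce eqL.
- have := memL x true ce'; rewrite -eqL memL // eqxx => /esym/eqP->//.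
- case: c' ce' eqL => [x|] // ce' eqL.
  have := memL x true ce'; rewrite -eqL memL //= eqxx. by [].
Qed.

Lemma cardL k (e : {set T}) c : #|e| = k -> c \in Copt e -> #|L e c| = k.
Proof.
move=> ek; rewrite inE; case: c => [x|] /= xe.
- rewrite /clS setUC cardsU1 card_imset; last by move=> a b [].
  have -> : (x, true) \in [set (y, false) | y in e :\ x] = false.
    by apply/imsetP => -[z _].
  rewrite /= (cardsD1 x e) xe in ek; lia.
- by rewrite /oldS card_imset // => a b [].
Qed.


Lemma L_in (E : {set {set T}}) f c : f \in E -> c \in Copt f -> L f c \in ilth_edges E.
Proof.
move=> fE; rewrite inE; case: c => [x|] /= xf; rewrite /ilth_edges inE.
- apply/orP; right; exact: (imset2_f (fun e x => clS e x) fE xf).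
- apply/orP; left; exact: (imset_f (fun e => oldS e) fE).
Qed.

Lemma ilth_edgesP (E : {set {set T}}) e' : e' \in ilth_edges E ->
  exists2 f, f \in E & exists2 c, c \in Copt f & e' = L f c.
Proof.
rewrite /ilth_edges inE => /orP[/imsetP[f fE ->]|/imset2P[f x fE xf ->]].
- by exists f => //; exists None; rewrite ?inE.
- by exists f => //; exists (Some x); rewrite ?inE.
Qed.

Definition proj (p : tup (T * bool)%type) : tup T :=
  (p.1.1.1.1.1.1, [set z.1 | z in p.1.1.1.1.2], p.1.1.1.2.1,
   [set z.1 | z in p.1.1.2], p.1.2.1, [set z.1 | z in p.2]).

Lemma tri3 (c : option T) a b : c = Some a \/ c = Some b \/ (c != Some a /\ c != Some b).
Proof.
by case: (eqVneq c (Some a)) => [->|?]; [left|right; case: (eqVneq c (Some b)) => [->|?]; [left|right]].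
Qed.

Lemma Some_neq (a b : T) : a != b -> (Some a == Some b) = false.
Proof. exact: negbTE. Qed.
Lemma Some_neq' (a b : T) : a != b -> (Some b == Some a) = false.
Proof. rewrite eq_sym; exact: negbTE. Qed.

Section Fib.
Variables (E : {set {set T}}) (u v w : T) (e1 e2 e3 : {set T}).

Definition lift (c : option T * option T * option T) : tup (T * bool)%type :=
  ((u, c.1.1 == Some u), L e1 c.1.1, (v, c.1.1 == Some v), L e2 c.1.2,
   (w, c.1.2 == Some w), L e3 c.2).

Definition Cset : {set option T * option T * option T} :=
  [set c | [&& c.1.1 \in Copt e1, c.1.2 \in Copt e2, c.2 \in Copt e3,
      (c.1.1 == Some u) == (c.2 == Some u), (c.1.1 == Some v) == (c.1.2 == Some v)
      & (c.1.2 == Some w) == (c.2 == Some w)]].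

Definition fiber : {set tup (T * bool)%type} :=
  [set p' | goodb (ilth_edges E) p' && (proj p' == (u, e1, v, e2, w, e3))].

Hypothesis good : goodb E (u, e1, v, e2, w, e3).

Lemma fiber_eq : fiber = lift @: Cset.
Proof.
move: good; rewrite /goodb /= => /and5P[uv vw wu e1E /and5P[e2E e3E
   /andP[ue1 ve1] /andP[ve2 we2] /andP[we3 ue3]]].
apply/setP => p'; apply/idP/idP.
- rewrite inE; case: p' => [[[[[[u' bu] e1'] [v' bv]] e2'] [w' bw]] e3'].
  rewrite /goodb /proj /= !xpair_eqE => /andP[/and5P[_ _ _ e1E' /and5P[e2E' e3E'
     /andP[ue1' ve1'] /andP[ve2' we2'] /andP[we3' ue3']]]
     /andP[/andP[/andP[/andP[/andP[/eqP eu /eqP f1] /eqP ev] /eqP f2] /eqP ew] /eqP f3]].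
  subst u' v' w'.
  case: (ilth_edgesP e1E') => g1 g1E [c1 c1g e1'E]; subst e1'.
  case: (ilth_edgesP e2E') => g2 g2E [c2 c2g e2'E]; subst e2'.
  case: (ilth_edgesP e3E') => g3 g3E [c3 c3g e3'E]; subst e3'.
  rewrite fstL // in f1; rewrite fstL // in f2; rewrite fstL // in f3.
  subst g1 g2 g3.
  rewrite !memL' // in ue1' ve1' ve2' we2' we3' ue3'.
  move/eqP: ue1' => bu1; move/eqP: ue3' => bu3; move/eqP: ve1' => bv1;
  move/eqP: ve2' => bv2; move/eqP: we2' => bw2; move/eqP: we3' => bw3.
  apply/imsetP; exists (c1, c2, c3).
  + by rewrite inE /= c1g c2g c3g -bu1 -bu3 -bv1 -bv2 -bw2 -bw3 !eqxx.
  + by rewrite /lift /= -bu1 -bv1 -bw2.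
- case/imsetP => -[[c1 c2] c3]; rewrite inE /= => /and5P[c1g c2g c3g /eqP bu
    /andP[/eqP bv /eqP bw]] ->.
  rewrite inE /goodb /proj /= !fstL // !eqxx !andbT.
  rewrite !L_in // !memL' // !eqxx bu bv bw !eqxx /= !andbT.
  rewrite !xpair_eqE /=.
  by rewrite (negbTE uv) (negbTE vw) (negbTE wu).
Qed.


Lemma lift_inj : {in Cset &, injective lift}.
Proof.
move=> [[c1 c2] c3] [[d1 d2] d3] hc hd [_ L1 _ L2 _ L3].
move: hc; rewrite inE /= => /and4P[c1g c2g c3g _].
move: hd; rewrite inE /= => /and4P[d1g d2g d3g _].
have h1 := L_inj c1g d1g L1.
have h2 := L_inj c2g d2g L2.
have h3 := L_inj c3g d3g L3.
by rewrite h1 h2 h3.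
Qed.

Lemma card_fiber : #|fiber| = #|Cset|.
Proof. by rewrite fiber_eq card_in_imset //; exact: lift_inj. Qed.

Definition O (e : {set T}) (a b : T) := Copt e :\ Some a :\ Some b.

Lemma mem_shape1 (a b : option T) (A : {set option T}) (x : option T * option T * option T) :
  (x \in [set (a, c, b) | c in A]) = [&& x.1.1 == a, x.1.2 \in A & x.2 == b].
Proof.
apply/imsetP/idP => [[c cA ->]|]; first by rewrite /= !eqxx cA.
case: x => [[x1 x2] x3] /= /and3P[/eqP-> xA /eqP->]; by exists x2.
Qed.

Lemma mem_shape2 (a b : option T) (A : {set option T}) (x : option T * option T * option T) :
  (x \in [set (a, b, c) | c in A]) = [&& x.1.1 == a, x.1.2 == b & x.2 \in A].
Proof.
apply/imsetP/idP => [[c cA ->]|]; first by rewrite /= !eqxx cA.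
case: x => [[x1 x2] x3] /= /and3P[/eqP-> /eqP-> xA]; by exists x3.
Qed.

Lemma mem_shape3 (a b : option T) (A : {set option T}) (x : option T * option T * option T) :
  (x \in [set (c, a, b) | c in A]) = [&& x.1.1 \in A, x.1.2 == a & x.2 == b].
Proof.
apply/imsetP/idP => [[c cA ->]|]; first by rewrite /= !eqxx cA.
case: x => [[x1 x2] x3] /= /and3P[xA /eqP-> /eqP->]; by exists x1.
Qed.

Lemma card_Copt (e : {set T}) : #|Copt e| = #|e|.+1.
Proof.
have -> : Copt e = None |: [set Some x | x in e].
  apply/setP => -[x|]; rewrite !inE //=.
  apply/idP/imsetP => [xe|[y ye [->]]] //; by exists x.
rewrite cardsU1 card_imset; last by move=> a b [].
by have -> : (None \in [set Some x | x in e]) = false by apply/imsetP => -[].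
Qed.

Lemma card_O (e : {set T}) a b : a \in e -> b \in e -> a != b -> #|O e a b| = #|e|.-1.
Proof.
move=> ae be ab; rewrite /O.
have := card_Copt e; rewrite (cardsD1 (Some a)) (cardsD1 (Some b) (Copt e :\ Some a)).
rewrite !inE ae be /=.
have -> : (Some b != Some a) = true by rewrite eq_sym.
by rewrite andbT /= !add1n => -[<-].
Qed.

Lemma Cset_eq : Cset =
  setX (setX (O e1 u v) (O e2 v w)) (O e3 w u)
  :|: [set (Some u, c, Some u) | c in O e2 v w]
  :|: [set (Some v, Some v, c) | c in O e3 w u]
  :|: [set (c, Some w, Some w) | c in O e1 u v].
Proof.
move: (good); rewrite /goodb /= => /and5P[uv vw wu e1E /and5P[e2E e3E
   /andP[ue1 ve1] /andP[ve2 we2] /andP[we3 ue3]]].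
apply/setP => -[[c1 c2] c3].
rewrite !inE mem_shape1 mem_shape2 mem_shape3 /O !inE /=.
case: (tri3 c1 u v) => [->|[->|[h1u h1v]]];
case: (tri3 c2 v w) => [->|[->|[h2v h2w]]];
case: (tri3 c3 w u) => [->|[->|[h3w h3u]]];
rewrite /= ?eqxx ?(Some_neq uv) ?(Some_neq' uv) ?(Some_neq vw) ?(Some_neq' vw) ?(Some_neq wu) ?(Some_neq' wu) ?ue1 ?ve1 ?ve2 ?we2 ?we3 ?ue3;
try rewrite (negbTE h1u); try rewrite (negbTE h1v); try rewrite (negbTE h2v);
try rewrite (negbTE h2w); try rewrite (negbTE h3w); try rewrite (negbTE h3u);
rewrite /= ?andbT ?andbF ?orbF ?orbT //.
by rewrite andbA.
Qed.


Definition C0 := setX (setX (O e1 u v) (O e2 v w)) (O e3 w u).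
Definition Cu := [set (Some u, c, Some u) | c in O e2 v w].
Definition Cv := [set (Some v, Some v, c) | c in O e3 w u].
Definition Cw := [set (c, Some w, Some w) | c in O e1 u v].

Lemma D1 : C0 :&: Cu = set0.
Proof.
move: (good); rewrite /goodb /= => /and5P[uv vw wu e1E /and5P[e2E e3E
   /andP[ue1 ve1] /andP[ve2 we2] /andP[we3 ue3]]].
apply/setP => -[[c1 c2] c3].
rewrite /C0 /Cu !inE mem_shape1 /O !inE /=.
case: (tri3 c1 u v) => [->|[->|[h1u h1v]]];
case: (tri3 c2 v w) => [->|[->|[h2v h2w]]];
case: (tri3 c3 w u) => [->|[->|[h3w h3u]]];
rewrite /= ?eqxx ?(Some_neq uv) ?(Some_neq' uv) ?(Some_neq vw) ?(Some_neq' vw) ?(Some_neq wu) ?(Some_neq' wu) ?ue1 ?ve1 ?ve2 ?we2 ?we3 ?ue3;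
try rewrite (negbTE h1u); try rewrite (negbTE h1v); try rewrite (negbTE h2v);
try rewrite (negbTE h2w); try rewrite (negbTE h3w); try rewrite (negbTE h3u);
rewrite /= ?andbT ?andbF ?orbF ?orbT //.
Qed.

Lemma D2 : (C0 :|: Cu) :&: Cv = set0.
Proof.
move: (good); rewrite /goodb /= => /and5P[uv vw wu e1E /and5P[e2E e3E
   /andP[ue1 ve1] /andP[ve2 we2] /andP[we3 ue3]]].
apply/setP => -[[c1 c2] c3].
rewrite /C0 /Cu /Cv !inE mem_shape1 mem_shape2 /O !inE /=.
case: (tri3 c1 u v) => [->|[->|[h1u h1v]]];
case: (tri3 c2 v w) => [->|[->|[h2v h2w]]];
case: (tri3 c3 w u) => [->|[->|[h3w h3u]]];
rewrite /= ?eqxx ?(Some_neq uv) ?(Some_neq' uv) ?(Some_neq vw) ?(Some_neq' vw) ?(Some_neq wu) ?(Some_neq' wu) ?ue1 ?ve1 ?ve2 ?we2 ?we3 ?ue3;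
try rewrite (negbTE h1u); try rewrite (negbTE h1v); try rewrite (negbTE h2v);
try rewrite (negbTE h2w); try rewrite (negbTE h3w); try rewrite (negbTE h3u);
rewrite /= ?andbT ?andbF ?orbF ?orbT //.
Qed.

Lemma D3 : (C0 :|: Cu :|: Cv) :&: Cw = set0.
Proof.
move: (good); rewrite /goodb /= => /and5P[uv vw wu e1E /and5P[e2E e3E
   /andP[ue1 ve1] /andP[ve2 we2] /andP[we3 ue3]]].
apply/setP => -[[c1 c2] c3].
rewrite /C0 /Cu /Cv /Cw !inE mem_shape1 mem_shape2 mem_shape3 /O !inE /=.
case: (tri3 c1 u v) => [->|[->|[h1u h1v]]];
case: (tri3 c2 v w) => [->|[->|[h2v h2w]]];
case: (tri3 c3 w u) => [->|[->|[h3w h3u]]];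
rewrite /= ?eqxx ?(Some_neq uv) ?(Some_neq' uv) ?(Some_neq vw) ?(Some_neq' vw) ?(Some_neq wu) ?(Some_neq' wu) ?ue1 ?ve1 ?ve2 ?we2 ?we3 ?ue3;
try rewrite (negbTE h1u); try rewrite (negbTE h1v); try rewrite (negbTE h2v);
try rewrite (negbTE h2w); try rewrite (negbTE h3w); try rewrite (negbTE h3u);
rewrite /= ?andbT ?andbF ?orbF ?orbT //.
Qed.

Lemma card_Cset k : #|e1| = k -> #|e2| = k -> #|e3| = k ->
  #|Cset| = k.-1 * k.-1 * k.-1 + k.-1 + k.-1 + k.-1.
Proof.
move=> k1 k2 k3.
have := good; rewrite /goodb /= => /and5P[uv vw wu e1E /and5P[e2E e3E
   /andP[ue1 ve1] /andP[ve2 we2] /andP[we3 ue3]]].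
rewrite Cset_eq -/C0 -/Cu -/Cv -/Cw.
rewrite cardsU D3 cards0 subn0 cardsU D2 cards0 subn0 cardsU D1 cards0 subn0.
rewrite /C0 /Cu /Cv /Cw !cardsX !card_imset; try by move=> x y [].
by rewrite !card_O // ?k1 ?k2 ?k3 // eq_sym.
Qed.

End Fib.



Lemma memL_fst e c y b : c \in Copt e -> (y, b) \in L e c -> y \in e.
Proof.
move=> ce; rewrite memL //; case: b; last by case/andP.
by move/eqP=> ce'; move: ce; rewrite ce' inE.
Qed.

Lemma memL_bool e c y b b' : c \in Copt e -> (y, b) \in L e c -> (y, b') \in L e c -> b = b'.
Proof.
move=> ce; rewrite !memL //.
case: b; case: b' => //= h1 h2.
- by rewrite h1 andbF in h2.
- by rewrite h2 andbF in h1.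
Qed.

Lemma good_proj (E : {set {set T}}) p' : goodb (ilth_edges E) p' -> goodb E (proj p').
Proof.
case: p' => [[[[[[u' bu] e1'] [v' bv]] e2'] [w' bw]] e3'].
rewrite /goodb /proj /= => /and5P[uv vw wu e1E' /and5P[e2E' e3E'
     /andP[ue1' ve1'] /andP[ve2' we2'] /andP[we3' ue3']]].
case: (ilth_edgesP e1E') => g1 g1E [c1 c1g e1'E]; subst e1'.
case: (ilth_edgesP e2E') => g2 g2E [c2 c2g e2'E]; subst e2'.
case: (ilth_edgesP e3E') => g3 g3E [c3 c3g e3'E]; subst e3'.
rewrite !fstL // g1E g2E g3E.
rewrite (memL_fst c1g ue1') (memL_fst c1g ve1') (memL_fst c2g ve2') (memL_fst c2g we2').
rewrite (memL_fst c3g we3') (memL_fst c3g ue3') /= !andbT.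
apply/and3P; split.
- apply/eqP => euv; subst v'.
  by move: uv; rewrite (memL_bool c1g ue1' ve1') eqxx.
- apply/eqP => evw; subst w'.
  by move: vw; rewrite (memL_bool c2g ve2' we2') eqxx.
- apply/eqP => ewu; subst u'.
  by move: wu; rewrite (memL_bool c3g we3' ue3') eqxx.
Qed.

Lemma card_by_fibers (A' : {set tup (T * bool)%type}) (P : pred (tup T)) :
  (forall p', p' \in A' -> P (proj p')) ->
  #|A'| = \sum_(p | P p) #|[set p' in A' | proj p' == p]|.
Proof.
move=> hP; rewrite -sum1_card (partition_big proj P) //.
apply: eq_bigr => p _; rewrite -sum1_card; apply: eq_bigl => p'; by rewrite !inE.
Qed.

End Gen.

Definition lam k := k.-1 * k.-1 * k.-1 + k.-1 + k.-1 + k.-1.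
Definition ngood (H : hgraph) := #|[set p : tup (hvert H) | goodb (hedges H) p]|.

Lemma uniform_step k H : uniform k H -> uniform k (ilth_step H).
Proof.
move=> hu e' /= /ilth_edgesP[f fE [c cf ->]]; exact: cardL (hu f fE) cf.
Qed.

Lemma fiber_lam k (H : hgraph) (p : tup (hvert H)) : uniform k H -> goodb (hedges H) p ->
  #|[set p' in [set p' : tup (hvert H * bool)%type | goodb (ilth_edges (hedges H)) p'] | proj p' == p]|
  = lam k.
Proof.
move=> hu; case: p => [[[[[u e1] v] e2] w] e3] gp.
have -> : [set p' in [set p' : tup (hvert H * bool)%type | goodb (ilth_edges (hedges H)) p'] | proj p' == (u, e1, v, e2, w, e3)] = fiber (hedges H) u v w e1 e2 e3.
  by apply/setP => p'; rewrite !inE.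
rewrite card_fiber // (card_Cset gp (k := k)) //.
- move: gp; rewrite /goodb /= => /and5P[_ _ _ e1E _]; exact: hu.
- move: gp; rewrite /goodb /= => /and5P[_ _ _ _ /and5P[e2E _ _ _ _]]; exact: hu.
- move: gp; rewrite /goodb /= => /and5P[_ _ _ _ /and5P[_ e3E _ _ _]]; exact: hu.
Qed.

Lemma ngood_step k H : uniform k H -> ngood (ilth_step H) = lam k * ngood H.
Proof.
move=> hu; rewrite /ngood /=.
rewrite (card_by_fibers (P := fun p => goodb (hedges H) p)); last first.
  by move=> p'; rewrite inE; exact: good_proj.
rewrite (eq_bigr (fun _ => lam k)); last by move=> p gp; exact: fiber_lam.
rewrite (eq_bigl (fun p => p \in [set p | goodb (hedges H) p])); last by move=> p; rewrite inE.
by rewrite sum_nat_const mulnC.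
Qed.

Definition triH (H : hgraph) (p : tup (hvert H)) :=
  is_hypertriangle p.1.1.1.1.1 p.1.1.1.1.2 p.1.1.1.2 p.1.1.2 p.1.2 p.2.

Lemma triH_good H p : triH p = goodb (hedges H) p &&
  [&& p.1.1.1.1.2 != p.1.1.2, p.1.1.2 != p.2 & p.2 != p.1.1.1.1.2].
Proof.
rewrite /triH /is_hypertriangle /goodb; apply/idP/idP.
- case/and5P => a b c d /and5P[e f g h /and4P[i j l m]].
  by rewrite a b c d e f g h i j l m.
- case/andP => /and5P[a b c d /and5P[e f g h i]] /and3P[j l m].
  by rewrite a b c d e f g h i j l m.
Qed.

Lemma ntri_step k H : uniform k H ->
  lam k * num_hypertriangles H <= num_hypertriangles (ilth_step H).
Proof.
move=> hu.
pose B := [set p' : tup (hvert H * bool)%type |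
            goodb (ilth_edges (hedges H)) p' && triH (proj p')].
have sub : B \subset [set p' | @triH (ilth_step H) p'].
  apply/subsetP => -[[[[[u' e1'] v'] e2'] w'] e3']; rewrite !inE => /andP[g' t].
  rewrite triH_good g' /=.
  rewrite triH_good /proj /= in t; case/andP: t => _ /and3P[d1 d2 d3].
  apply/and3P; split; [apply: contra d1 | apply: contra d2 | apply: contra d3];
    by move=> /eqP->.
apply: leq_trans (subset_leq_card sub).
rewrite (card_by_fibers (P := fun p => @triH H p)); last first.
  by move=> p'; rewrite inE => /andP[].
rewrite (eq_bigr (fun _ => lam k)); last first.
  move=> p tp.
  have gp : goodb (hedges H) p by rewrite triH_good in tp; case/andP: tp.
  rewrite -(fiber_lam hu gp); apply: eq_card => p'; rewrite !inE.
  case: (eqVneq (proj p') p) => [->|]; last by rewrite !andbF.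
  by rewrite tp !andbT.
rewrite (eq_bigl (fun p => p \in [set p | @triH H p])); last by move=> p; rewrite inE.
by rewrite sum_nat_const mulnC.
Qed.

Lemma lam_eq k : lam k = (k - 1) ^ 3 + 3 * (k - 1).
Proof. rewrite /lam /=. nia. Qed.

Lemma expn_pow m n : expn m n = Nat.pow m n.
Proof. elim: n => [|n IH] //; rewrite expnS IH /=. lia. Qed.

Lemma INR_muln a b : INR (a * b) = (INR a * INR b)%R.
Proof. exact: mult_INR. Qed.

Lemma INR_leq a b : a <= b -> (INR a <= INR b)%R.
Proof. by move/leP; exact: le_INR. Qed.

Lemma ntri_le_good H : num_hypertriangles H <= ngood H.
Proof.
apply: subset_leq_card; apply/subsetP => p; rewrite !inE.
by have := triH_good p; rewrite /triH => -> /andP[].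
Qed.

Unset Implicit Arguments.

Theorem lemma4p6 (k : nat) (H0 : hgraph) :
  (2 <= k)%nat ->
  uniform k H0 ->
  (exists t0 : nat, (0 < num_hypertriangles (ilth H0 t0))%nat) ->
  big_Theta (fun t => INR (num_hypertriangles (ilth H0 t)))
            (fun t => (INR ((k - 1) ^ 3 + 3 * (k - 1)) ^ t)%R).
Proof.
move=> k2 hu0 [t0 ht0].
have hu : forall t, uniform k (ilth H0 t).
  by elim=> [|t IH] //=; exact: uniform_step.
have G : forall t, ngood (ilth H0 t) = expn (lam k) t * ngood H0.
  elim=> [|t IH]; first by rewrite expn0 mul1n.
  by rewrite /= (ngood_step (hu t)) IH expnS mulnA.
have N : forall n, expn (lam k) n * num_hypertriangles (ilth H0 t0)
                   <= num_hypertriangles (ilth H0 (t0 + n)).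
  elim=> [|n IH]; first by rewrite expn0 mul1n addn0.
  rewrite addnS /= expnS -mulnA.
  apply: leq_trans (ntri_step (hu (t0 + n))).
  by rewrite leq_mul2l IH orbT.
rewrite -lam_eq.
have lpos : 0 < lam k.
  rewrite /lam -!subn1; nia.
have Lpos : (0 < INR (lam k))%R by apply: lt_0_INR; apply/ltP.
exists (INR (num_hypertriangles (ilth H0 t0)) / (INR (lam k) ^ t0))%R.
exists (INR (ngood H0) + 1)%R.
exists t0.
split.
  apply: Rdiv_lt_0_compat; last exact: pow_lt.
  by apply: lt_0_INR; apply/ltP.
split.
  have := pos_INR (ngood H0); lra.
move=> t ht.
have tE : t = t0 + (t - t0) by rewrite subnKC.
split.
- move: (t - t0) tE => n ->.
  apply: Rle_trans (INR_leq (N n)).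
  rewrite INR_muln expn_pow pow_INR pow_add.
  have h := pow_lt _ t0 Lpos.
  replace (INR (num_hypertriangles (ilth H0 t0)) / INR (lam k) ^ t0 *
     (INR (lam k) ^ t0 * INR (lam k) ^ n))%R
    with (INR (lam k) ^ n * INR (num_hypertriangles (ilth H0 t0)))%R.
    exact: Rle_refl.
  field; lra.
- apply: Rle_trans (INR_leq (leq_trans (ntri_le_good _) (leqnn _))) _.
  rewrite G INR_muln expn_pow pow_INR.
  have := pos_INR (ngood H0).
  have := pow_lt _ t Lpos.
  nra.
Qed.
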